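(* Let $G$ be the disjointness graph of a finite family of $2$-way infinite $3$-monotone chains in the plane. Then $\chi(G)\le\omega(G)^3+\omega(G)$.
   Context: A curve is $x$-monotone if every vertical line meets it in at most one point. A $2$-way infinite $k$-monotone chain is a (possibly self-intersecting) continuous curve in the plane that is the union of $k$ consecutive pieces, each $x$-monotone, consecutive pieces sharing an endpoint, such that the first and last pieces are unbounded and have unbounded projections to the $x$-axis. The disjointness graph of a family of subsets of the plane has the members as vertices, two adjacent if and only if they are disjoint. $\chi(G)$ and $\omega(G)$ denote the chromatic number and clique number of $G$. *)

(* Defs.v *)
From Stdlib Require Import Reals ClassicalEpsilon.
From mathcomp Require Import all_boot.
Set Implicit Arguments. Unset Strict Implicit. Unset Printing Implicit Defensive.

Local Open Scope R_scope.

Definition point := (R * R)%type.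
Definition region := point -> Prop.

(** x-coordinate injective on a parameter set: the image of the piece meets
    every vertical line in at most one point (x-monotone piece). *)
Definition x_injective_on (cx : R -> R) (D : R -> Prop) : Prop :=
  forall s t, D s -> D t -> cx s = cx t -> s = t.

(** A 2-way infinite 3-monotone chain: the image of a continuous curve
    gamma = (cx, cy) : R -> R^2, split at parameters t1 <= t2 into three
    consecutive pieces (-oo,t1], [t1,t2], [t2,+oo), each x-monotone,
    the first and last having unbounded projection to the x-axis. *)
Definition is_2way_3monotone_chain (C : region) : Prop :=
  exists (cx cy : R -> R) (t1 t2 : R),
    continuity cx /\ continuity cy /\ t1 <= t2 /\
    (forall p : point, C p <-> exists t, p = (cx t, cy t)) /\
    x_injective_on cx (fun t => t <= t1) /\
    x_injective_on cx (fun t => t1 <= t <= t2) /\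
    x_injective_on cx (fun t => t2 <= t) /\
    (forall M, exists t, t <= t1 /\ M < Rabs (cx t)) /\
    (forall M, exists t, t2 <= t /\ M < Rabs (cx t)).

Local Close Scope R_scope.

Definition disjoint_regions (A B : region) : Prop := forall p, ~ (A p /\ B p).

Definition disj_adj (I : finType) (C : I -> region) (i j : I) : bool :=
  (i != j) && (if excluded_middle_informative (disjoint_regions (C i) (C j))
               then true else false).

Definition is_clique (I : finType) (adj : rel I) (S : {set I}) : bool :=
  [forall i in S, forall j in S, (i != j) ==> adj i j].

Definition clique_number (I : finType) (adj : rel I) : nat :=
  \max_(S : {set I} | is_clique adj S) #|S|.

Definition colorable (I : finType) (adj : rel I) (k : nat) : bool :=
  [exists f : {ffun I -> 'I_k}, [forall i, forall j, adj i j ==> (f i != f j)]].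

Definition loopless (I : finType) (adj : rel I) : Prop := forall i, ~~ adj i i.

Lemma colorable_card (I : finType) (adj : rel I) :
  loopless adj -> colorable adj #|I|.
Proof.
move=> hl; apply/existsP; exists [ffun i => enum_rank i].
apply/forallP=> i; apply/forallP=> j; apply/implyP=> hij.
rewrite !ffunE; apply/negP=> /eqP/enum_rank_inj eij.
by move: hij; rewrite eij (negbTE (hl j)).
Qed.

Lemma colorable_ex (I : finType) (adj : rel I) :
  exists k, colorable [rel i j | (i != j) && adj i j] k.
Proof.
exists #|I|; apply: colorable_card => i /=; by rewrite eqxx.
Qed.

(** Chromatic number: least k admitting a proper k-colouring. Loops (none
    occur in disj_adj) are ignored. *)
Definition chromatic_number (I : finType) (adj : rel I) : nat :=
  ex_minn (colorable_ex adj).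

(* Main.v *)
Require Import Defs.
From Stdlib Require Import Reals Ranalysis5 Lra ClassicalEpsilon Classical Lia.
From mathcomp Require Import all_boot zify.
Set Implicit Arguments.
Local Open Scope R_scope.

Lemma cont_eps (f : R -> R) :
  (forall x0 eps, 0 < eps -> exists d, 0 < d /\
     forall x, Rabs (x - x0) < d -> Rabs (f x - f x0) < eps) -> continuity f.
Proof.
move=> H x0; unfold continuity_pt, continue_in, limit1_in, limit_in; simpl.
move=> eps Heps; case: (H x0 eps Heps) => d [Hd Hx]; exists d; split => //.
move=> x [_ Hxd]; exact: Hx.
Qed.

Lemma cont_lip (f : R -> R) :
  (forall x y, Rabs (f x - f y) <= Rabs (x - y)) -> continuity f.
Proof.
move=> H; apply: cont_eps => x0 eps He; exists eps; split => // x Hx.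
by apply: Rle_lt_trans (H x x0) Hx.
Qed.

Lemma cont_add f g : continuity f -> continuity g -> continuity (fun x => f x + g x).
Proof. move=> Hf Hg; exact: (continuity_plus f g Hf Hg). Qed.
Lemma cont_sub f g : continuity f -> continuity g -> continuity (fun x => f x - g x).
Proof. move=> Hf Hg; exact: (continuity_minus f g Hf Hg). Qed.
Lemma cont_opp f : continuity f -> continuity (fun x => - f x).
Proof. move=> Hf; exact: (continuity_opp f Hf). Qed.
Lemma cont_comp f g : continuity f -> continuity g -> continuity (fun x => g (f x)).
Proof. move=> Hf Hg; exact: (continuity_comp f g Hf Hg). Qed.
Lemma cont_cst c : continuity (fun _ => c).
Proof. apply: continuity_const => x y //. Qed.
Lemma cont_id : continuity (fun x => x).
Proof. apply: cont_lip => x y; lra. Qed.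

Lemma cont_affine m q : continuity (fun l => m * l + q).
Proof.
apply: cont_eps => x0 eps He; exists (eps / (Rabs m + 1)); split.
  apply: Rdiv_lt_0_compat => //; move: (Rabs_pos m); lra.
move=> x Hx.
have -> : m * x + q - (m * x0 + q) = m * (x - x0) by ring.
rewrite Rabs_mult.
have Hm := Rabs_pos m.
have Hm1 : 0 < Rabs m + 1 by lra.
have : Rabs (x - x0) * (Rabs m + 1) < eps.
  by move: Hx; rewrite /Rdiv => Hx; apply/(Rmult_lt_reg_r (/ (Rabs m + 1))); [apply: Rinv_0_lt_compat|
    rewrite Rmult_assoc Rinv_r; [rewrite Rmult_1_r|lra]].
have := Rabs_pos (x - x0); nra.
Qed.

Lemma cont_min c : continuity (fun x => Rmin x c).
Proof.
apply: cont_lip => x y; unfold Rmin.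
destruct (Rle_dec x c); destruct (Rle_dec y c);
  unfold Rabs; repeat destruct Rcase_abs; lra.
Qed.
Lemma cont_max c : continuity (fun x => Rmax x c).
Proof.
apply: cont_lip => x y; unfold Rmax.
destruct (Rle_dec x c); destruct (Rle_dec y c);
  unfold Rabs; repeat destruct Rcase_abs; lra.
Qed.

Lemma ivt f a b y : continuity f -> a <= b ->
  (f a <= y <= f b \/ f b <= y <= f a) -> exists c, a <= c <= b /\ f c = y.
Proof.
move=> Hf Hab Hy.
case: (Req_dec a b) => [Heq|Hne]; first subst b.
  exists a; split; [lra|]. case: Hy => Hy; lra.
have Hlt : a < b by lra.
case: Hy => Hy.
  case: (f_interv_is_interv f a b y Hlt Hy (fun x _ => Hf x)) => c [Hc1 Hc2].
  by exists c.
have Hy' : (fun x => - f x) a <= - y <= (fun x => - f x) b by simpl; lra.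
case: (f_interv_is_interv (fun x => - f x) a b (- y) Hlt Hy'
         (fun x _ => cont_opp Hf x)) => c [Hc1 Hc2].
exists c; split => //; lra.
Qed.

Lemma nocross f g a b : continuity f -> continuity g ->
  (forall x, Rmin a b <= x <= Rmax a b -> f x <> g x) -> f a < g a -> f b < g b.
Proof.
move=> Hf Hg Hne Ha.
case: (Rlt_le_dec (f b) (g b)) => // Hb.
have Hb' : g b < f b.
  have Hbin : Rmin a b <= b <= Rmax a b.
    unfold Rmin, Rmax; destruct (Rle_dec a b); lra.
  destruct Hb as [Hlt|Heq]; [exact Hlt| exfalso; exact (Hne b Hbin (esym Heq))].
have Hh := cont_sub Hg Hf.
case: (Rle_dec a b) => Hab.
  case: (ivt (y:=0) Hh Hab) => [|c [Hc Hc0]]; first by simpl; lra.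
  have Hcin : Rmin a b <= c <= Rmax a b.
    unfold Rmin, Rmax; destruct (Rle_dec a b); lra.
  exfalso; apply: (Hne c Hcin); simpl in Hc0; lra.
have Hba : b <= a by lra.
case: (ivt (y:=0) Hh Hba) => [|c [Hc Hc0]]; first by simpl; lra.
have Hcin : Rmin a b <= c <= Rmax a b.
  unfold Rmin, Rmax; destruct (Rle_dec a b); lra.
exfalso; apply: (Hne c Hcin); simpl in Hc0; lra.
Qed.

Lemma nocross_iff f g a b : continuity f -> continuity g ->
  (forall x, Rmin a b <= x <= Rmax a b -> f x <> g x) -> (f a < g a <-> f b < g b).
Proof.
move=> Hf Hg Hne; split; first exact: nocross.
apply: nocross => // x Hx; apply: Hne.
unfold Rmin, Rmax in *; move: Hx; destruct (Rle_dec a b); destruct (Rle_dec b a); lra.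
Qed.

Definition convex (S : R -> Prop) := forall x y z, S x -> S z -> x <= y <= z -> S y.

Lemma convex_aff S x z l : convex S -> S x -> S z -> 0 <= l <= 1 -> S ((z - x) * l + x).
Proof.
move=> HS Hx Hz Hl.
case: (Rle_dec x z) => Hxz.
  apply: (HS x _ z) => //; nra.
apply: (HS z _ x) => //; nra.
Qed.

Lemma inj_incr (phi : R -> R) (S : R -> Prop) s0 u0 :
  continuity phi -> convex S ->
  (forall s t, S s -> S t -> phi s = phi t -> s = t) ->
  S s0 -> S u0 -> s0 < u0 -> phi s0 < phi u0 ->
  forall x y, S x -> S y -> x < y -> phi x < phi y.
Proof.
move=> Hphi HS Hinj Hs0 Hu0 Hsu Hpsu x y Hx Hy Hxy.
pose g l := phi ((u0 - y) * l + y) - phi ((s0 - x) * l + x).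
have Hg : continuity g.
  apply: cont_sub; apply: cont_comp => //; exact: cont_affine.
have H1 : (fun _ => 0) 1 < g 1.
  rewrite /g; have -> : (u0 - y) * 1 + y = u0 by ring.
  have -> : (s0 - x) * 1 + x = s0 by ring. simpl; lra.
have := nocross 1 0 (cont_cst 0) Hg _ H1.
rewrite /g; have -> : (u0 - y) * 0 + y = y by ring.
have -> : (s0 - x) * 0 + x = x by ring.
move=> H; suff : 0 < phi y - phi x by lra.
apply: H => l Hl.
have Hl' : 0 <= l <= 1.
  move: Hl; unfold Rmin, Rmax; destruct (Rle_dec 1 0); lra.
move=> Heq.
have Hp := @convex_aff S x s0 l HS Hx Hs0 Hl'.
have Hq := @convex_aff S y u0 l HS Hy Hu0 Hl'.
have Hpos : 0 < (u0 - s0) * l + (y - x) * (1 - l).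
  have Hb : 0 <= (y - x) * (1 - l) by apply: Rmult_le_pos; lra.
  case: (Req_dec l 0) => [->|Hl0]; first lra.
  have : 0 < (u0 - s0) * l by apply: Rmult_lt_0_compat; lra.
  lra.
have Hpq : (s0 - x) * l + x < (u0 - y) * l + y by nra.
have := Hinj _ _ Hq Hp; lra.
Qed.

Lemma mono_cont (psi : R -> R) :
  (forall x y, x <= y -> psi x <= psi y) ->
  (forall x y t, psi x <= t <= psi y -> exists z, psi z = t) ->
  continuity psi.
Proof.
move=> Hm Hiv; apply: cont_eps => x0 eps He.
pose e2 := eps / 2.
have He2 : 0 < e2 by rewrite /e2; lra.
have [d1 [Hd1 H1]] : exists d1, 0 < d1 /\ forall x, x0 - d1 < x -> psi x0 - e2 <= psi x.
  case: (classic (exists x, psi x <= psi x0 - e2)) => [[x Hx]|Hn].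
    have Hx0 : x <= x0.
      case: (Rle_dec x x0) => // Hc; have := Hm x0 x; lra.
    case: (Hiv x x0 (psi x0 - e2)) => [|z Hz]; first lra.
    have Hzx : z < x0.
      case: (Rlt_dec z x0) => // Hc; have := Hm x0 z; lra.
    exists (x0 - z); split; first lra.
    move=> y Hy; rewrite -Hz; apply: Hm; lra.
  exists 1; split; first lra.
  move=> y _; case: (Rle_dec (psi x0 - e2) (psi y)) => // Hc.
  exfalso; apply: Hn; exists y; lra.
have [d2 [Hd2 H2]] : exists d2, 0 < d2 /\ forall x, x < x0 + d2 -> psi x <= psi x0 + e2.
  case: (classic (exists x, psi x0 + e2 <= psi x)) => [[x Hx]|Hn].
    have Hx0 : x0 <= x.
      case: (Rle_dec x0 x) => // Hc; have := Hm x x0; lra.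
    case: (Hiv x0 x (psi x0 + e2)) => [|z Hz]; first lra.
    have Hzx : x0 < z.
      case: (Rlt_dec x0 z) => // Hc; have := Hm z x0; lra.
    exists (z - x0); split; first lra.
    move=> y Hy; rewrite -Hz; apply: Hm; lra.
  exists 1; split; first lra.
  move=> y _; case: (Rle_dec (psi y) (psi x0 + e2)) => // Hc.
  exfalso; apply: Hn; exists y; lra.
exists (Rmin d1 d2); split; first by apply: Rmin_pos.
move=> x Hx.
have Hxd1 : Rabs (x - x0) < d1 := Rlt_le_trans _ _ _ Hx (Rmin_l _ _).
have Hxd2 : Rabs (x - x0) < d2 := Rlt_le_trans _ _ _ Hx (Rmin_r _ _).
move: Hxd1 Hxd2; unfold Rabs; destruct (Rcase_abs (x - x0)) => Ha Hb;
  have := H1 x; have := H2 x; destruct (Rcase_abs (psi x - psi x0)); rewrite /e2; lra.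
Qed.

Lemma build_inv (phi cl : R -> R) (S : R -> Prop) :
  convex S ->
  (forall s t, S s -> S t -> s < t -> phi s < phi t) ->
  (forall x, exists t, S t /\ phi t = cl x) ->
  (forall x y, x <= y -> cl x <= cl y) ->
  (forall t, S t -> cl (phi t) = phi t) ->
  exists psi, continuity psi /\ (forall x, S (psi x) /\ phi (psi x) = cl x) /\
     (forall t, S t -> psi (phi t) = t).
Proof.
move=> HS Hinc Hsurj Hcl Hfix.
pose psi x := proj1_sig (constructive_indefinite_description _ (Hsurj x)).
have Hpsi : forall x, S (psi x) /\ phi (psi x) = cl x.
  move=> x; rewrite /psi; case: constructive_indefinite_description => //.
have Hinj : forall s t, S s -> S t -> phi s = phi t -> s = t.
  move=> s t Hs Ht Heq; case: (Rtotal_order s t) => [Hst|[//|Hts]].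
    have := Hinc _ _ Hs Ht Hst; lra.
  have := Hinc _ _ Ht Hs Hts; lra.
have Hback : forall t, S t -> psi (phi t) = t.
  move=> t Ht; case: (Hpsi (phi t)) => H1 H2; apply: Hinj => //.
  by rewrite H2 Hfix.
exists psi; split; last by split.
apply: mono_cont.
  move=> x y Hxy; case: (Rle_dec (psi x) (psi y)) => // Hc.
  have Hlt : psi y < psi x by lra.
  case: (Hpsi x) => Hx1 Hx2; case: (Hpsi y) => Hy1 Hy2.
  have := Hinc _ _ Hy1 Hx1 Hlt; have := Hcl _ _ Hxy; lra.
move=> x y t Ht; exists (phi t); apply: Hback.
case: (Hpsi x) => Hx1 _; case: (Hpsi y) => Hy1 _.
exact: (HS _ _ _ Hx1 Hy1 Ht).
Qed.

Definition ray (d : bool) (c x : R) : Prop := if d then c <= x else x <= c.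
Definition betw (c d x : R) : Prop := (c <= x <= d) \/ (d <= x <= c).

Lemma lray_incr (phi : R -> R) t1 : continuity phi ->
  (forall s t, s <= t1 -> t <= t1 -> phi s = phi t -> s = t) ->
  phi (t1 - 1) < phi t1 ->
  (forall M, exists t, t <= t1 /\ M < Rabs (phi t)) ->
  exists psi, continuity psi /\ (forall x, psi x <= t1 /\ phi (psi x) = Rmin x (phi t1)) /\
    (forall t, t <= t1 -> psi (phi t) = t).
Proof.
move=> Hc Hinj Hlt Hunb.
have HS : convex (fun t => t <= t1) by move=> x y z; lra.
have Hinc : forall s t, s <= t1 -> t <= t1 -> s < t -> phi s < phi t.
  move=> s t Hs Ht Hst.
  apply: (@inj_incr phi (fun t => t <= t1) (t1 - 1) t1) => //; lra.
have Hle : forall t, t <= t1 -> phi t <= phi t1.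
  move=> t Ht; case: (Req_dec t t1) => [->|Hne]; first lra.
  have := Hinc t t1 Ht (Rle_refl _); lra.
apply: (@build_inv phi (fun x => Rmin x (phi t1)) (fun t => t <= t1)) => //.
- move=> x; set y := Rmin x (phi t1).
  have Hy : y <= phi t1 by rewrite /y; apply: Rmin_r.
  case: (Hunb (Rabs y + Rabs (phi t1))) => t [Ht HM].
  have H1 := Hle t Ht.
  have H2 : phi t < y.
    have Ha := Rle_abs (phi t1); have Hb := Rabs_pos y; have Hd := Rabs_pos (phi t1).
    have Hc3 := Rle_abs (- y); rewrite Rabs_Ropp in Hc3.
    case: (Rcase_abs (phi t)) => Hn.
      rewrite (Rabs_left _ Hn) in HM; lra.
    rewrite (Rabs_pos_eq _ (Rge_le _ _ Hn)) in HM; lra.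
  case: (@ivt phi t t1 y Hc Ht) => [|c [Hc1 Hc2]]; first lra.
  exists c; split => //; lra.
- move=> x y Hxy; unfold Rmin; destruct (Rle_dec x (phi t1)); destruct (Rle_dec y (phi t1)); lra.
- move=> t Ht; apply: Rmin_left; exact: Hle.
Qed.

Lemma seg_incr (phi : R -> R) s1 s2 : s1 < s2 -> continuity phi ->
  (forall s t, s1 <= s <= s2 -> s1 <= t <= s2 -> phi s = phi t -> s = t) ->
  phi s1 < phi s2 ->
  exists psi, continuity psi /\
    (forall x, s1 <= psi x <= s2 /\ phi (psi x) = Rmax (phi s1) (Rmin x (phi s2))) /\
    (forall t, s1 <= t <= s2 -> psi (phi t) = t).
Proof.
move=> Hs Hc Hinj Hlt.
have HS : convex (fun t => s1 <= t <= s2) by move=> x y z; lra.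
have Hinc : forall s t, s1 <= s <= s2 -> s1 <= t <= s2 -> s < t -> phi s < phi t.
  move=> s t Hs' Ht Hst.
  apply: (@inj_incr phi (fun t => s1 <= t <= s2) s1 s2) => //; lra.
have Hle : forall t, s1 <= t <= s2 -> phi s1 <= phi t <= phi s2.
  move=> t Ht; split.
    case: (Req_dec t s1) => [->|Hne]; first lra.
    have := Hinc s1 t (conj (Rle_refl _) (Rlt_le _ _ Hs)) Ht; lra.
  case: (Req_dec t s2) => [->|Hne]; first lra.
  have := Hinc t s2 Ht (conj (Rlt_le _ _ Hs) (Rle_refl _)); lra.
apply: (@build_inv phi (fun x => Rmax (phi s1) (Rmin x (phi s2))) (fun t => s1 <= t <= s2)) => //.
- move=> x; set y := Rmax (phi s1) (Rmin x (phi s2)).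
  have Hy : phi s1 <= y <= phi s2.
    rewrite /y; unfold Rmax, Rmin; destruct (Rle_dec x (phi s2));
    destruct (Rle_dec (phi s1) _); lra.
  case: (@ivt phi s1 s2 y Hc (Rlt_le _ _ Hs)) => [|c [Hc1 Hc2]]; first lra.
  by exists c.
- move=> x y Hxy; unfold Rmax, Rmin; destruct (Rle_dec x (phi s2)); destruct (Rle_dec y (phi s2));
  destruct (Rle_dec (phi s1) x); destruct (Rle_dec (phi s1) y);
  destruct (Rle_dec (phi s1) (phi s2)); lra.
- move=> t Ht; have := Hle t Ht; unfold Rmax, Rmin; destruct (Rle_dec (phi t) (phi s2));
  destruct (Rle_dec (phi s1) _); lra.
Qed.

Lemma piece_lray cx cy t1 : continuity cx -> continuity cy ->
  x_injective_on cx (fun t => t <= t1) ->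
  (forall M, exists t, t <= t1 /\ M < Rabs (cx t)) ->
  exists d F, continuity F /\ F (cx t1) = cy t1 /\
    (forall t, t <= t1 -> ray d (cx t1) (cx t) /\ cy t = F (cx t)) /\
    (forall x, ray d (cx t1) x -> exists t, t <= t1 /\ cx t = x).
Proof.
move=> Hx Hy Hinj Hunb.
have Hne : cx (t1 - 1) <> cx t1.
  move=> Heq; have := Hinj (t1 - 1) t1 (ltac:(simpl; lra)) (ltac:(simpl; lra)) Heq; lra.
case: (Rlt_dec (cx (t1 - 1)) (cx t1)) => Hlt.
  case: (@lray_incr cx t1 Hx Hinj Hlt Hunb) => psi [Hpc [Hp1 Hp2]].
  exists false, (fun x => cy (psi x)); split; first exact: cont_comp.
  split; first by rewrite Hp2 //; lra.
  split.
    move=> t Ht; rewrite Hp2 //; split => //=.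
    case: (Hp1 (cx t)) => _; rewrite Hp2 // => H; rewrite H; apply: Rmin_r.
  move=> x /= Hxr; exists (psi x); case: (Hp1 x) => H1 H2; split => //.
  by rewrite H2 Rmin_left.
have Hlt' : (fun t => - cx t) (t1 - 1) < (fun t => - cx t) t1 by simpl; lra.
have Hinj' : forall s t, s <= t1 -> t <= t1 -> (fun t => - cx t) s = (fun t => - cx t) t -> s = t.
  move=> s t Hs Ht /= Heq; apply: Hinj => //; lra.
have Hunb' : forall M, exists t, t <= t1 /\ M < Rabs ((fun t => - cx t) t).
  move=> M; case: (Hunb M) => t [Ht HM]; exists t; split => //=; by rewrite Rabs_Ropp.
case: (@lray_incr (fun t => - cx t) t1 (cont_opp Hx) Hinj' Hlt' Hunb') => psi [Hpc [Hp1 Hp2]].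
exists true, (fun x => cy (psi (- x))); split.
  apply: cont_comp => //; apply: cont_comp => //; exact: (cont_opp cont_id).
split; first by rewrite (Hp2 t1) //; lra.
split.
  move=> t Ht; rewrite (Hp2 t) //; split => //=.
  case: (Hp1 (- cx t)) => _; rewrite (Hp2 t) // => H.
  have := Rmin_r (- cx t) (- cx t1); lra.
move=> x /= Hxr; exists (psi (- x)); case: (Hp1 (- x)) => H1 H2; split => //.
move: H2; rewrite Rmin_left; lra.
Qed.

Lemma piece_rray cx cy t2 : continuity cx -> continuity cy ->
  x_injective_on cx (fun t => t2 <= t) ->
  (forall M, exists t, t2 <= t /\ M < Rabs (cx t)) ->
  exists d F, continuity F /\ F (cx t2) = cy t2 /\
    (forall t, t2 <= t -> ray d (cx t2) (cx t) /\ cy t = F (cx t)) /\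
    (forall x, ray d (cx t2) x -> exists t, t2 <= t /\ cx t = x).
Proof.
move=> Hx Hy Hinj Hunb.
have Hopp : continuity (fun t => - t) := cont_opp cont_id.
have Hinj' : x_injective_on (fun t => cx (- t)) (fun t => t <= - t2).
  move=> s t Hs Ht Heq; have := Hinj (- s) (- t) (ltac:(simpl in *; lra)) (ltac:(simpl in *; lra)) Heq; lra.
have Hunb' : forall M, exists t, t <= - t2 /\ M < Rabs ((fun t => cx (- t)) t).
  move=> M; case: (Hunb M) => t [Ht HM]; exists (- t); split; first lra.
  by rewrite /= Ropp_involutive.
case: (@piece_lray (fun t => cx (- t)) (fun t => cy (- t)) (- t2) (cont_comp Hopp Hx)
   (cont_comp Hopp Hy) Hinj' Hunb') => d [F [HF [H1 [H2 H3]]]].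
move: H1 H2 H3; rewrite /= Ropp_involutive => H1 H2 H3.
exists d, F; split => //; split => //; split.
  move=> t Ht; have := H2 (- t) (ltac:(lra)); by rewrite Ropp_involutive.
move=> x Hxr; case: (H3 x Hxr) => t [Ht Htx]; exists (- t); split => //; lra.
Qed.

Lemma piece_seg cx cy s1 s2 : s1 <= s2 -> continuity cx -> continuity cy ->
  x_injective_on cx (fun t => s1 <= t <= s2) ->
  exists F, continuity F /\ F (cx s1) = cy s1 /\ F (cx s2) = cy s2 /\
    (forall t, s1 <= t <= s2 -> betw (cx s1) (cx s2) (cx t) /\ cy t = F (cx t)) /\
    (forall x, betw (cx s1) (cx s2) x -> exists t, s1 <= t <= s2 /\ cx t = x).
Proof.
move=> Hs Hx Hy Hinj.
case: (Req_dec s1 s2) => [Heq|Hne].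
  subst s2; exists (fun _ => cy s1); split; first exact: cont_cst.
  split => //; split => //; split.
    move=> t Ht; have -> : t = s1 by lra. rewrite /betw; split => //; lra.
  move=> x Hb; exists s1; split; first lra. rewrite /betw in Hb; lra.
have Hlt : s1 < s2 by lra.
have Hne' : cx s1 <> cx s2.
  move=> Heq; have := Hinj s1 s2 (ltac:(simpl; lra)) (ltac:(simpl; lra)) Heq; lra.
case: (Rlt_dec (cx s1) (cx s2)) => Hc.
  case: (@seg_incr cx s1 s2 Hlt Hx Hinj Hc) => psi [Hpc [Hp1 Hp2]].
  exists (fun x => cy (psi x)); split; first exact: cont_comp.
  split; first by rewrite Hp2 //; lra.
  split; first by rewrite Hp2 //; lra.
  split.
    move=> t Ht; rewrite Hp2 //; split => //.
    case: (Hp1 (cx t)) => _; rewrite Hp2 // => H; rewrite /betw; left; rewrite H.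
    unfold Rmax, Rmin; destruct (Rle_dec (cx t) (cx s2)); destruct (Rle_dec (cx s1) _); lra.
  move=> x Hxb; exists (psi x); case: (Hp1 x) => H1 H2; split => //.
  rewrite H2; move: Hxb; rewrite /betw; unfold Rmax, Rmin; destruct (Rle_dec x (cx s2));
    destruct (Rle_dec (cx s1) _); lra.
have Hc' : (fun t => - cx t) s1 < (fun t => - cx t) s2 by simpl; lra.
have Hinj' : forall s t, s1 <= s <= s2 -> s1 <= t <= s2 ->
   (fun t => - cx t) s = (fun t => - cx t) t -> s = t.
  move=> s t Hs' Ht /= Heq; apply: Hinj => //; lra.
case: (@seg_incr (fun t => - cx t) s1 s2 Hlt (cont_opp Hx) Hinj' Hc') => psi [Hpc [Hp1 Hp2]].
exists (fun x => cy (psi (- x))); split.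
  apply: cont_comp => //; apply: cont_comp => //; exact: (cont_opp cont_id).
split; first by rewrite (Hp2 s1) //; lra.
split; first by rewrite (Hp2 s2) //; lra.
split.
  move=> t Ht; rewrite (Hp2 t) //; split => //.
  case: (Hp1 (- cx t)) => _; rewrite (Hp2 t) // => H; rewrite /betw; right; move: H.
  unfold Rmax, Rmin; destruct (Rle_dec (- cx t) (- cx s2)); destruct (Rle_dec (- cx s1) _); lra.
move=> x Hxb; exists (psi (- x)); case: (Hp1 (- x)) => H1 H2; split => //.
move: H2 Hxb; rewrite /betw; unfold Rmax, Rmin; destruct (Rle_dec (- x) (- cx s2));
  destruct (Rle_dec (- cx s1) _); lra.
Qed.

Definition U3 c1 c2 (d1 d3 : bool) (F1 F2 F3 : R -> R) (p : point) : Prop :=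
  (ray d1 c1 p.1 /\ p.2 = F1 p.1) \/ (betw c1 c2 p.1 /\ p.2 = F2 p.1) \/
  (ray d3 c2 p.1 /\ p.2 = F3 p.1).

Lemma chain_pieces (Cr : region) : is_2way_3monotone_chain Cr ->
  exists c1 c2 d1 d3 F1 F2 F3, continuity F1 /\ continuity F2 /\ continuity F3 /\
    F1 c1 = F2 c1 /\ F2 c2 = F3 c2 /\ (forall p, Cr p <-> U3 c1 c2 d1 d3 F1 F2 F3 p).
Proof.
case=> cx [cy [t1 [t2 [Hx [Hy [H12 [HC [Hi1 [Hi2 [Hi3 [Hu1 Hu3]]]]]]]]]]].
case: (piece_lray Hx Hy Hi1 Hu1) => d1 [F1 [HF1 [E1 [P1 S1]]]].
case: (piece_seg H12 Hx Hy Hi2) => F2 [HF2 [E2 [E2' [P2 S2]]]].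
case: (piece_rray Hx Hy Hi3 Hu3) => d3 [F3 [HF3 [E3 [P3 S3]]]].
exists (cx t1), (cx t2), d1, d3, F1, F2, F3.
do 3 (split => //); split; first by rewrite E1 E2.
split; first by rewrite E2' E3.
move=> [x y]; rewrite HC /U3 /=; split.
  case=> t [-> ->].
  case: (Rle_dec t t1) => Ht1.
    by left; case: (P1 t Ht1) => Hr ->.
  case: (Rle_dec t t2) => Ht2.
    by right; left; case: (P2 t (ltac:(lra))) => Hr ->.
  by right; right; case: (P3 t (ltac:(lra))) => Hr ->.
case=> [[Hr ->]|[[Hr ->]|[Hr ->]]].
- case: (S1 x Hr) => t [Ht <-]; exists t; case: (P1 t Ht) => _ <- //.
- case: (S2 x Hr) => t [Ht <-]; exists t; case: (P2 t Ht) => _ <- //.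
- case: (S3 x Hr) => t [Ht <-]; exists t; case: (P3 t Ht) => _ <- //.
Qed.

Inductive shp : Type :=
| SLine (h : R -> R)
| SZ (a b : R) (g1 g2 g3 : R -> R)
| SB (k : bool) (e : R) (u v : R -> R).

Definition wf (s : shp) : Prop :=
  match s with
  | SLine h => continuity h
  | SZ a b g1 g2 g3 => continuity g1 /\ continuity g2 /\ continuity g3 /\ b < a /\
                       g1 a = g2 a /\ g2 b = g3 b
  | SB k e u v => continuity u /\ continuity v /\ u e = v e
  end.

Definition pts (s : shp) (p : point) : Prop :=
  match s with
  | SLine h => p.2 = h p.1
  | SZ a b g1 g2 g3 => (p.1 <= a /\ p.2 = g1 p.1) \/ (b <= p.1 <= a /\ p.2 = g2 p.1) \/
                       (b <= p.1 /\ p.2 = g3 p.1)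
  | SB k e u v => ray k e p.1 /\ (p.2 = u p.1 \/ p.2 = v p.1)
  end.

Definition glue (f1 f2 : R -> R) c x := f1 (Rmin x c) + f2 (Rmax x c) - f1 c.

Lemma glue_cont f1 f2 c : continuity f1 -> continuity f2 -> continuity (glue f1 f2 c).
Proof.
move=> H1 H2; apply: cont_sub; last exact: cont_cst.
apply: cont_add; apply: cont_comp => //; [exact: cont_min|exact: cont_max].
Qed.

Lemma glue_l f1 f2 c x : f1 c = f2 c -> x <= c -> glue f1 f2 c x = f1 x.
Proof. move=> E H; rewrite /glue Rmin_left // Rmax_right //; lra. Qed.
Lemma glue_r f1 f2 c x : f1 c = f2 c -> c <= x -> glue f1 f2 c x = f2 x.
Proof. move=> E H; rewrite /glue Rmin_right // Rmax_left //; lra. Qed.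

Lemma pieces_core c1 c2 d1 d3 F1 F2 F3 :
  continuity F1 -> continuity F2 -> continuity F3 -> F1 c1 = F2 c1 -> F2 c2 = F3 c2 ->
  (d1 = false /\ d3 = true) \/ (d1 = d3 /\ c1 <= c2) ->
  exists s, wf s /\ forall p, U3 c1 c2 d1 d3 F1 F2 F3 p <-> pts s p.
Proof.
move=> H1 H2 H3 E1 E2 [[-> ->]|[<- Hc]].
  case: (Rle_dec c1 c2) => Hc.
    pose G := glue F2 F3 c2.
    have EG : F1 c1 = G c1 by rewrite /G glue_l.
    exists (SLine (glue F1 G c1)); split.
      by apply: glue_cont => //; apply: glue_cont.
    move=> [x y]; rewrite /U3 /pts /ray /betw /=; split.
      case=> [[Hr ->]|[[Hr ->]|[Hr ->]]].
      - by rewrite glue_l.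
      - have Hr' : c1 <= x <= c2 by case: Hr; lra.
        rewrite (glue_r _ _ EG); last lra.
        rewrite /G glue_l //; lra.
      - rewrite (glue_r _ _ EG); last lra.
        rewrite /G glue_r //; lra.
    move=> ->; case: (Rle_dec x c1) => Hx1; first by left; rewrite glue_l.
    rewrite (glue_r _ _ EG); last lra.
    case: (Rle_dec x c2) => Hx2.
      right; left; split; first lra. rewrite /G glue_l //.
    right; right; split; first lra. rewrite /G glue_r //; lra.
  exists (SZ c1 c2 F1 F2 F3); split; first by split; [|split; [|split; [|split; [lra|split]]]].
  move=> [x y]; rewrite /U3 /pts /ray /betw /=.
  have Hb : (c1 <= x <= c2 \/ c2 <= x <= c1) <-> c2 <= x <= c1 by split; [case; lra|right].
  by rewrite Hb.
case: d1 Hc => Hc.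
  pose G := glue F2 F3 c2.
  exists (SB true c1 F1 G); split.
    do 2 (split => //); first by apply: glue_cont.
    by rewrite /G glue_l.
  move=> [x y]; rewrite /U3 /pts /ray /betw /=; split.
    case=> [[Hr ->]|[[Hr ->]|[Hr ->]]].
    - by split => //; left.
    - have Hr' : c1 <= x <= c2 by case: Hr; lra.
      split; first lra. right; rewrite /G glue_l //; lra.
    - split; first lra. right; rewrite /G glue_r //; lra.
  case=> Hr [->|->]; first by left.
  case: (Rle_dec x c2) => Hx2.
    right; left; split; first lra. rewrite /G glue_l //.
  right; right; split; first lra. rewrite /G glue_r //; lra.
pose G := glue F1 F2 c1.
exists (SB false c2 F3 G); split.
  do 2 (split => //); first by apply: glue_cont.
  by rewrite /G glue_r.
move=> [x y]; rewrite /U3 /pts /ray /betw /=; split.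
  case=> [[Hr ->]|[[Hr ->]|[Hr ->]]].
  - split; first lra. right; rewrite /G glue_l //.
  - have Hr' : c1 <= x <= c2 by case: Hr; lra.
    split; first lra. right; rewrite /G glue_r //; lra.
  - by split => //; left.
case=> Hr [->|->]; first by right; right.
case: (Rle_dec x c1) => Hx1.
  by left; rewrite /G glue_l.
right; left; split; first lra. rewrite /G glue_r //; lra.
Qed.

Lemma U3_swap c1 c2 d1 d3 F1 F2 F3 p :
  U3 c1 c2 d1 d3 F1 F2 F3 p <-> U3 c2 c1 d3 d1 F3 F2 F1 p.
Proof. rewrite /U3 /betw; tauto. Qed.

Lemma pieces_shape c1 c2 d1 d3 F1 F2 F3 :
  continuity F1 -> continuity F2 -> continuity F3 -> F1 c1 = F2 c1 -> F2 c2 = F3 c2 ->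
  exists s, wf s /\ forall p, U3 c1 c2 d1 d3 F1 F2 F3 p <-> pts s p.
Proof.
move=> H1 H2 H3 E1 E2.
have Hsw : (d3 = false /\ d1 = true) \/ (d3 = d1 /\ c2 <= c1) ->
   exists s, wf s /\ forall p, U3 c1 c2 d1 d3 F1 F2 F3 p <-> pts s p.
  move=> H; case: (pieces_core H3 H2 H1 (esym E2) (esym E1) H) => s [Hs Hp].
  by exists s; split => // p; rewrite U3_swap.
destruct d1; destruct d3.
- case: (Rle_dec c1 c2) => Hc; first by apply: pieces_core => //; right.
  apply: Hsw; right; split => //; lra.
- apply: Hsw; by left.
- apply: pieces_core => //; by left.
- case: (Rle_dec c1 c2) => Hc; first by apply: pieces_core => //; right.
  apply: Hsw; right; split => //; lra.
Qed.

Lemma chain_shape (Cr : region) : is_2way_3monotone_chain Cr ->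
  exists s, wf s /\ forall p, Cr p <-> pts s p.
Proof.
case/chain_pieces => c1 [c2 [d1 [d3 [F1 [F2 [F3 [H1 [H2 [H3 [E1 [E2 HC]]]]]]]]]]].
case: (@pieces_shape c1 c2 d1 d3 F1 F2 F3 H1 H2 H3 E1 E2) => s [Hs Hp].
by exists s; split => // p; rewrite HC.
Qed.

Definition rlt (x y : R) : bool := if Rlt_dec x y then true else false.
Definition rle (x y : R) : bool := if Rle_dec x y then true else false.

Lemma rltE x y : rlt x y = true <-> x < y.
Proof. rewrite /rlt; case: Rlt_dec => //. Qed.
Lemma rlt_iff a b c d : (a < b <-> c < d) -> rlt a b = rlt c d.
Proof.
rewrite /rlt => H; destruct (Rlt_dec a b) as [h1|h1]; destruct (Rlt_dec c d) as [h2|h2] => //.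
- by exfalso; apply: h2; apply H.
- by exfalso; apply: h1; apply H.
Qed.
Lemma rleT x y : x <= y -> rle x y = true.
Proof. rewrite /rle; case: Rle_dec => //. Qed.
Lemma rleF x y : y < x -> rle x y = false.
Proof. rewrite /rle; case: Rle_dec => // H; lra. Qed.

Lemma xorbF b : xorb b false = b. Proof. by case: b. Qed.
Lemma xorbb b : xorb b b = false. Proof. by case: b. Qed.

Definition isA (s : shp) : bool :=
  match s with SB _ _ _ _ => false | _ => true end.

Definition par (s : shp) (p : point) : bool :=
  match s with
  | SLine h => rlt p.2 (h p.1)
  | SZ a b g1 g2 g3 =>
      xorb (rle p.1 a && rlt p.2 (g1 p.1))
        (xorb (rle b p.1 && rle p.1 a && rlt p.2 (g2 p.1)) (rle b p.1 && rlt p.2 (g3 p.1)))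
  | SB _ _ _ _ => false
  end.

Lemma seg_sgn f g lo hi : continuity f -> continuity g -> lo <= hi ->
  (forall z, lo <= z <= hi -> f z <> g z) -> rlt (f lo) (g lo) = rlt (f hi) (g hi).
Proof.
move=> Hf Hg Hlh H; apply: rlt_iff; apply: nocross_iff => // z Hz; apply: H.
move: Hz; rewrite Rmin_left // Rmax_right //.
Qed.

Lemma par_seg s f x x' : wf s -> isA s -> continuity f -> x <= x' ->
  (forall z, x <= z <= x' -> ~ pts s (z, f z)) -> par s (x, f x) = par s (x', f x').
Proof.
case: s => [h|a b g1 g2 g3|k e u v] //= Hw _ Hf Hxx Hav.
  apply: (seg_sgn Hf Hw Hxx) => z Hz Heq; exact: (Hav z Hz Heq).
case: Hw => [H1 [H2 [H3 [Hba [Ea Eb]]]]].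
have E1 : forall lo hi, x <= lo -> lo <= hi -> hi <= x' -> hi <= a ->
    rlt (f lo) (g1 lo) = rlt (f hi) (g1 hi).
  move=> lo hi H0 H01 H02 H03; apply: seg_sgn => // z Hz Heq.
  apply: (Hav z); [lra|left; split => //=; lra].
have E2 : forall lo hi, x <= lo -> lo <= hi -> hi <= x' -> b <= lo -> hi <= a ->
    rlt (f lo) (g2 lo) = rlt (f hi) (g2 hi).
  move=> lo hi H0 H01 H02 H03 H04; apply: seg_sgn => // z Hz Heq.
  apply: (Hav z); [lra|right; left; split => //=; lra].
have E3 : forall lo hi, x <= lo -> lo <= hi -> hi <= x' -> b <= lo ->
    rlt (f lo) (g3 lo) = rlt (f hi) (g3 hi).
  move=> lo hi H0 H01 H02 H03; apply: seg_sgn => // z Hz Heq.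
  apply: (Hav z); [lra|right; right; split => //=; lra].
case: (Rlt_dec x b) => Hxb.
  rewrite (rleT (Rlt_le _ _ (Rlt_trans _ _ _ Hxb Hba))) (rleF Hxb) /=.
  case: (Rlt_dec x' b) => Hx'b.
    rewrite (rleT (Rlt_le _ _ (Rlt_trans _ _ _ Hx'b Hba))) (rleF Hx'b) /=.
    rewrite !xorbF; apply: E1 => //; lra.
  rewrite (rleT (Rnot_lt_le _ _ Hx'b)) /=.
  case: (Rle_dec x' a) => Hx'a.
    rewrite (rleT Hx'a) /= (E1 x x') //; try lra.
    rewrite -(E2 b x') //; try lra. rewrite -(E3 b x') //; try lra.
    by rewrite Eb xorbb xorbF.
  rewrite (rleF (Rnot_le_lt _ _ Hx'a)) /=.
  rewrite xorbF (E1 x a) //; try lra. rewrite Ea -(E2 b a) //; try lra.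
  rewrite Eb (E3 b x') //; lra.
rewrite (rleT (Rnot_lt_le _ _ Hxb)).
have Hx'b : b <= x' by lra.
rewrite (rleT Hx'b) /=.
case: (Rle_dec x a) => Hxa.
  rewrite (rleT Hxa) /=.
  case: (Rle_dec x' a) => Hx'a.
    rewrite (rleT Hx'a) /= (E1 x x') //; try lra. rewrite (E2 x x') //; try lra.
    by rewrite (E3 x x') //; lra.
  rewrite (rleF (Rnot_le_lt _ _ Hx'a)) /=.
  rewrite (E1 x a) //; try lra. rewrite (E2 x a) //; try lra.
  rewrite (E3 x x') //; try lra. by rewrite Ea; case: (rlt (f a) (g2 a)); case: (rlt (f x') (g3 x')).
rewrite (rleF (Rnot_le_lt _ _ Hxa)) /=.
have Hx'a : a < x' by lra.
rewrite (rleF Hx'a) /=. apply: E3 => //; lra.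
Qed.

Lemma par_seg2 s f x x' : wf s -> isA s -> continuity f ->
  (forall z, Rmin x x' <= z <= Rmax x x' -> ~ pts s (z, f z)) ->
  par s (x, f x) = par s (x', f x').
Proof.
move=> Hw HA Hf Hav; case: (Rle_dec x x') => Hxx.
  apply: par_seg => // z Hz; apply: Hav; rewrite Rmin_left // Rmax_right //.
symmetry; apply: par_seg => //; first lra.
move=> z Hz; apply: Hav; rewrite Rmin_right ?Rmax_left //; lra.
Qed.

Definition lv (s : shp) : R -> R :=
  match s with SLine h => h | SZ _ _ g1 _ _ => g1 | SB _ _ u _ => u end.

Definition leftok (x0 : R) (s : shp) : Prop :=
  match s with SZ a b _ _ _ => x0 < b | _ => True end.

Definition disjS (X Y : shp) : Prop := forall p, pts X p -> ~ pts Y p.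

Lemma lv_pts X x0 : wf X -> isA X -> leftok x0 X -> pts X (x0, lv X x0).
Proof.
case: X => [h|a b g1 g2 g3|k e u v] //= Hw _ Hl; case: Hw => [_ [_ [_ [Hba _]]]].
left; split => //; lra.
Qed.

Lemma par_const Y X x0 : wf Y -> isA Y -> wf X -> isA X -> leftok x0 X -> disjS X Y ->
  forall p, pts X p -> par Y p = par Y (x0, lv X x0).
Proof.
move=> HwY HAY HwX HAX Hl Hd [x y].
case: X HwX HAX Hl Hd => [h|a b g1 g2 g3|k e u v] //= HwX _ Hl Hd.
  move=> ->; apply: par_seg2 => // z _ Hz; exact: (Hd (z, h z) erefl Hz).
case: HwX => [H1 [H2 [H3 [Hba [Ea Eb]]]]].
have P1 : forall z, z <= a -> par Y (z, g1 z) = par Y (x0, g1 x0).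
  move=> z Hz; apply: par_seg2 => // w Hw Hp.
  apply: (Hd (w, g1 w)) => //=; left; split => //.
  move: Hw; unfold Rmin, Rmax; destruct (Rle_dec z x0); lra.
have P2 : forall z, b <= z <= a -> par Y (z, g2 z) = par Y (x0, g1 x0).
  move=> z Hz; rewrite -(P1 a (Rle_refl _)) Ea; apply: par_seg2 => // w Hw Hp.
  apply: (Hd (w, g2 w)) => //=; right; left; split => //.
  move: Hw; rewrite Rmin_left ?Rmax_right; lra.
have P3 : forall z, b <= z -> par Y (z, g3 z) = par Y (x0, g1 x0).
  move=> z Hz; rewrite -(P2 b (ltac:(lra))) Eb; apply: par_seg2 => // w Hw Hp.
  apply: (Hd (w, g3 w)) => //=; right; right; split => //.
  move: Hw; rewrite Rmin_right ?Rmax_left; lra.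
case=> [[Hx ->]|[[Hx ->]|[Hx ->]]]; [exact: P1|exact: P2|exact: P3].
Qed.

Lemma par_left Y x0 y : wf Y -> isA Y -> leftok x0 Y -> par Y (x0, y) = rlt y (lv Y x0).
Proof.
case: Y => [h|a b g1 g2 g3|k e u v] //= Hw _ Hl.
case: Hw => [_ [_ [_ [Hba _]]]].
by rewrite (rleT (ltac:(lra) : x0 <= a)) (rleF Hl) /= xorbF.
Qed.

Definition ltA x0 (X Y : shp) : Prop := disjS X Y /\ lv X x0 < lv Y x0.

Lemma disjS_sym X Y : disjS X Y -> disjS Y X.
Proof. move=> H p HY HX; exact: (H p HX HY). Qed.

Lemma ltA_trans x0 X Y Z : wf X -> wf Y -> wf Z -> isA X -> isA Y -> isA Z ->
  leftok x0 X -> leftok x0 Y -> leftok x0 Z ->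
  ltA x0 X Y -> ltA x0 Y Z -> ltA x0 X Z.
Proof.
move=> HwX HwY HwZ HAX HAY HAZ HlX HlY HlZ [HdXY HXY] [HdYZ HYZ].
split; last lra.
move=> p HX HZ.
have E1 := @par_const Y X x0 HwY HAY HwX HAX HlX HdXY p HX.
have E2 := @par_const Y Z x0 HwY HAY HwZ HAZ HlZ (disjS_sym HdYZ) p HZ.
rewrite E1 (@par_left Y x0 (lv X x0) HwY HAY HlY) in E2.
rewrite (@par_left Y x0 (lv Z x0) HwY HAY HlY) in E2.
have : rlt (lv X x0) (lv Y x0) = true by apply/rltE.
have : rlt (lv Z x0) (lv Y x0) = false by rewrite /rlt; case: Rlt_dec => // h; lra.
congruence.
Qed.

Lemma ltA_cover x0 X Y : wf X -> wf Y -> isA X -> isA Y -> leftok x0 X -> leftok x0 Y ->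
  disjS X Y -> ltA x0 X Y \/ ltA x0 Y X.
Proof.
move=> HwX HwY HAX HAY HlX HlY Hd.
have HX := @lv_pts X x0 HwX HAX HlX; have HY := @lv_pts Y x0 HwY HAY HlY.
case: (Rtotal_order (lv X x0) (lv Y x0)) => [H|[H|H]].
- by left.
- exfalso; apply: (Hd _ HX); by rewrite H.
- by right; split => //; exact: disjS_sym.
Qed.

Definition RC (k1 : bool) (e1 : R) (k2 : bool) (e2 : R) : Prop :=
  match k1, k2 with
  | false, true => True
  | true, false => False
  | _, _ => e1 <= e2
  end.

Definition Up (X Y : shp) : Prop :=
  match X, Y with
  | SB k1 e1 u1 v1, SB k2 e2 u2 v2 => RC k1 e1 k2 e2 /\
      forall x, ray k1 e1 x -> ray k2 e2 x -> Rmax (u1 x) (v1 x) < Rmin (u2 x) (v2 x)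
  | _, _ => False
  end.

Definition Down (X Y : shp) : Prop :=
  match X, Y with
  | SB k1 e1 u1 v1, SB k2 e2 u2 v2 => RC k1 e1 k2 e2 /\
      forall x, ray k1 e1 x -> ray k2 e2 x -> Rmax (u2 x) (v2 x) < Rmin (u1 x) (v1 x)
  | _, _ => False
  end.

Definition In (X Y : shp) : Prop :=
  match X, Y with
  | SB k1 e1 u1 v1, SB k2 e2 u2 v2 => k1 = k2 /\ (if k1 then e1 <= e2 else e2 <= e1) /\
      forall x, ray k2 e2 x -> Rmin (u1 x) (v1 x) < Rmin (u2 x) (v2 x) /\
                               Rmax (u2 x) (v2 x) < Rmax (u1 x) (v1 x)
  | _, _ => False
  end.

Lemma RC_mid k1 e1 k2 e2 k3 e3 x : RC k1 e1 k2 e2 -> RC k2 e2 k3 e3 ->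
  ray k1 e1 x -> ray k3 e3 x -> ray k2 e2 x.
Proof. by case: k1; case: k2; case: k3; rewrite /RC /ray //=; lra. Qed.

Lemma RC_trans k1 e1 k2 e2 k3 e3 : RC k1 e1 k2 e2 -> RC k2 e2 k3 e3 -> RC k1 e1 k3 e3.
Proof. by case: k1; case: k2; case: k3; rewrite /RC //=; lra. Qed.

Lemma Up_trans X Y Z : Up X Y -> Up Y Z -> Up X Z.
Proof.
case: X => // k1 e1 u1 v1; case: Y => // k2 e2 u2 v2; case: Z => // k3 e3 u3 v3 /=.
move=> [R12 H12] [R23 H23]; split; first exact: (@RC_trans k1 e1 k2 e2 k3 e3 R12 R23).
move=> x Hx1 Hx3; have Hx2 := @RC_mid k1 e1 k2 e2 k3 e3 x R12 R23 Hx1 Hx3.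
have := H12 x Hx1 Hx2; have := H23 x Hx2 Hx3; have := Rminmax (u2 x) (v2 x); lra.
Qed.

Lemma Down_trans X Y Z : Down X Y -> Down Y Z -> Down X Z.
Proof.
case: X => // k1 e1 u1 v1; case: Y => // k2 e2 u2 v2; case: Z => // k3 e3 u3 v3 /=.
move=> [R12 H12] [R23 H23]; split; first exact: (@RC_trans k1 e1 k2 e2 k3 e3 R12 R23).
move=> x Hx1 Hx3; have Hx2 := @RC_mid k1 e1 k2 e2 k3 e3 x R12 R23 Hx1 Hx3.
have := H12 x Hx1 Hx2; have := H23 x Hx2 Hx3; have := Rminmax (u2 x) (v2 x); lra.
Qed.

Lemma In_trans X Y Z : In X Y -> In Y Z -> In X Z.
Proof.
case: X => // k1 e1 u1 v1; case: Y => // k2 e2 u2 v2; case: Z => // k3 e3 u3 v3 /=.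
move=> [K12 [E12 H12]] [K23 [E23 H23]]; subst k2 k3.
split => //; split; first by destruct k1; lra.
move=> x Hx3.
have Hx2 : ray k1 e2 x by move: Hx3; rewrite /ray; destruct k1; lra.
have := H12 x Hx2; have := H23 x Hx3; lra.
Qed.

Lemma minmax_cases a b : (Rmin a b = a /\ Rmax a b = b) \/ (Rmin a b = b /\ Rmax a b = a).
Proof. unfold Rmin, Rmax; destruct (Rle_dec a b); [left|right]; split => //. Qed.

Lemma Up_disj X Y : Up X Y -> disjS X Y.
Proof.
case: X => // k1 e1 u1 v1; case: Y => // k2 e2 u2 v2 /= [_ H] [x y] /= [Hx1 Hy1] [Hx2 Hy2].
have := H x Hx1 Hx2.
have := Rmax_l (u1 x) (v1 x); have := Rmax_r (u1 x) (v1 x).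
have := Rmin_l (u2 x) (v2 x); have := Rmin_r (u2 x) (v2 x).
case: Hy1 => E1; case: Hy2 => E2; lra.
Qed.

Lemma Down_disj X Y : Down X Y -> disjS X Y.
Proof.
case: X => // k1 e1 u1 v1; case: Y => // k2 e2 u2 v2 /= [_ H] [x y] /= [Hx1 Hy1] [Hx2 Hy2].
have := H x Hx1 Hx2.
have := Rmax_l (u2 x) (v2 x); have := Rmax_r (u2 x) (v2 x).
have := Rmin_l (u1 x) (v1 x); have := Rmin_r (u1 x) (v1 x).
case: Hy1 => E1; case: Hy2 => E2; lra.
Qed.

Lemma In_disj X Y : In X Y -> disjS X Y.
Proof.
case: X => // k1 e1 u1 v1; case: Y => // k2 e2 u2 v2 /= [_ [_ H]] [x y] /= [Hx1 Hy1] [Hx2 Hy2].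
have := H x Hx2.
have := Rmax_l (u2 x) (v2 x); have := Rmax_r (u2 x) (v2 x).
have := Rmin_l (u2 x) (v2 x); have := Rmin_r (u2 x) (v2 x).
case: (minmax_cases (u1 x) (v1 x)) => [[-> ->]|[-> ->]];
case: Hy1 => E1; case: Hy2 => E2; lra.
Qed.

Lemma seg_J (J : R -> Prop) e x z : convex J -> J e -> J x ->
  Rmin e x <= z <= Rmax e x -> J z.
Proof.
move=> HJ He Hx; unfold Rmin, Rmax; destruct (Rle_dec e x) => Hz.
  exact: (HJ e z x).
exact: (HJ x z e).
Qed.

Lemma prop4 uX vX uY vY e (J : R -> Prop) :
  continuity uX -> continuity vX -> continuity uY -> continuity vY ->
  convex J -> J e -> uY e = vY e ->
  (forall x, J x -> uY x <> uX x /\ uY x <> vX x /\ vY x <> uX x /\ vY x <> vX x) ->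
  (forall x, J x -> Rmax (uX x) (vX x) < Rmin (uY x) (vY x)) \/
  (forall x, J x -> Rmax (uY x) (vY x) < Rmin (uX x) (vX x)) \/
  (forall x, J x -> Rmin (uX x) (vX x) < Rmin (uY x) (vY x) /\
                    Rmax (uY x) (vY x) < Rmax (uX x) (vX x)).
Proof.
move=> HuX HvX HuY HvY HJ He Efold Hne.
have tr : forall f g, continuity f -> continuity g -> (forall x, J x -> f x <> g x) ->
    forall x, J x -> (f e < g e <-> f x < g x).
  move=> f g Hf Hg Hfg x Hx; apply: nocross_iff => // z Hz.
  exact: (Hfg z (@seg_J J e x z HJ He Hx Hz)).
have n1 : forall x, J x -> uY x <> uX x by move=> x Hx; case: (Hne x Hx).
have n2 : forall x, J x -> uY x <> vX x by move=> x Hx; case: (Hne x Hx) => _ [].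
have n3 : forall x, J x -> vY x <> uX x by move=> x Hx; case: (Hne x Hx) => _ [_ []].
have n4 : forall x, J x -> vY x <> vX x by move=> x Hx; case: (Hne x Hx) => _ [_ [_]].
have n1' : forall x, J x -> uX x <> uY x by move=> x Hx H; apply: (n1 x Hx); lra.
have n2' : forall x, J x -> vX x <> uY x by move=> x Hx H; apply: (n2 x Hx); lra.
have n3' : forall x, J x -> uX x <> vY x by move=> x Hx H; apply: (n3 x Hx); lra.
have n4' : forall x, J x -> vX x <> vY x by move=> x Hx H; apply: (n4 x Hx); lra.
have t1 := tr _ _ HuY HuX n1; have t2 := tr _ _ HuY HvX n2.
have t3 := tr _ _ HvY HuX n3; have t4 := tr _ _ HvY HvX n4.
have t1' := tr _ _ HuX HuY n1'; have t2' := tr _ _ HvX HuY n2'.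
have t3' := tr _ _ HuX HvY n3'; have t4' := tr _ _ HvX HvY n4'.
have a1 := n1 e He; have a2 := n2 e He.
case: (Rlt_dec (uX e) (uY e)) => c1; case: (Rlt_dec (vX e) (uY e)) => c2.
- left => x Hx.
  have := proj1 (t1' x Hx) c1; have := proj1 (t2' x Hx) c2.
  have := proj1 (t3' x Hx) (ltac:(lra)); have := proj1 (t4' x Hx) (ltac:(lra)).
  unfold Rmin, Rmax; do 2 destruct Rle_dec; lra.
- right; right => x Hx.
  have := proj1 (t1' x Hx) c1; have := proj1 (t2 x Hx) (ltac:(lra)).
  have := proj1 (t3' x Hx) (ltac:(lra)); have := proj1 (t4 x Hx) (ltac:(lra)).
  unfold Rmin, Rmax; do 2 destruct Rle_dec; lra.
- right; right => x Hx.
  have := proj1 (t1 x Hx) (ltac:(lra)); have := proj1 (t2' x Hx) c2.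
  have := proj1 (t3 x Hx) (ltac:(lra)); have := proj1 (t4' x Hx) (ltac:(lra)).
  unfold Rmin, Rmax; do 2 destruct Rle_dec; lra.
- right; left => x Hx.
  have := proj1 (t1 x Hx) (ltac:(lra)); have := proj1 (t2 x Hx) (ltac:(lra)).
  have := proj1 (t3 x Hx) (ltac:(lra)); have := proj1 (t4 x Hx) (ltac:(lra)).
  unfold Rmin, Rmax; do 2 destruct Rle_dec; lra.
Qed.

Lemma ray_convex k e : convex (ray k e).
Proof. by move=> x y z; rewrite /ray; case: k; lra. Qed.

Lemma conv_and (J1 J2 : R -> Prop) : convex J1 -> convex J2 -> convex (fun x => J1 x /\ J2 x).
Proof. move=> H1 H2 x y z [a1 a2] [b1 b2] H; split; [exact: (H1 x y z)|exact: (H2 x y z)]. Qed.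

Lemma SB_ne k1 e1 u1 v1 k2 e2 u2 v2 : disjS (SB k1 e1 u1 v1) (SB k2 e2 u2 v2) ->
  forall x, ray k1 e1 x /\ ray k2 e2 x ->
    u2 x <> u1 x /\ u2 x <> v1 x /\ v2 x <> u1 x /\ v2 x <> v1 x.
Proof.
move=> Hd x [H1 H2].
have P1 : pts (SB k1 e1 u1 v1) (x, u1 x) by split => //; left.
have P2 : pts (SB k1 e1 u1 v1) (x, v1 x) by split => //; right.
split; [|split; [|split]] => E.
- by apply: (Hd _ P1); split => //=; left.
- by apply: (Hd _ P2); split => //=; left.
- by apply: (Hd _ P1); split => //=; right.
- by apply: (Hd _ P2); split => //=; right.
Qed.

Lemma B_cover_LR e1 u1 v1 e2 u2 v2 :
  wf (SB false e1 u1 v1) -> wf (SB true e2 u2 v2) ->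
  disjS (SB false e1 u1 v1) (SB true e2 u2 v2) ->
  Up (SB false e1 u1 v1) (SB true e2 u2 v2) \/ Down (SB false e1 u1 v1) (SB true e2 u2 v2).
Proof.
move=> [Hu1 [Hv1 E1]] [Hu2 [Hv2 E2]] Hd /=.
case: (Rlt_dec e1 e2) => He.
  left; split => // x; rewrite /ray; lra.
have HJ := conv_and (ray_convex false e1) (ray_convex true e2).
have Je : ray false e1 e2 /\ ray true e2 e2 by rewrite /ray; lra.
case: (@prop4 u1 v1 u2 v2 e2 _ Hu1 Hv1 Hu2 Hv2 HJ Je E2 (SB_ne Hd)) => [D|[D|D]].
- left; split => // x H1 H2; exact: D.
- right; split => // x H1 H2; exact: D.
exfalso; have Je1 : ray false e1 e1 /\ ray true e2 e1 by rewrite /ray; lra.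
have [A B] := D e1 Je1; rewrite E1 in A B.
move: A B; unfold Rmin, Rmax; repeat destruct Rle_dec; lra.
Qed.

Lemma B_cover X Y : wf X -> wf Y -> isA X = false -> isA Y = false -> disjS X Y ->
  Up X Y \/ Up Y X \/ Down X Y \/ Down Y X \/ In X Y \/ In Y X.
Proof.
case: X => // k1 e1 u1 v1; case: Y => // k2 e2 u2 v2 HwX HwY _ _ Hd.
have HwX' := HwX; have HwY' := HwY.
move: HwX HwY => [Hu1 [Hv1 E1]] [Hu2 [Hv2 E2]].
have Hd' := disjS_sym Hd.
have HJ := conv_and (ray_convex k1 e1) (ray_convex k2 e2).
have HJ' := conv_and (ray_convex k2 e2) (ray_convex k1 e1).
destruct k1; destruct k2.
- case: (Rle_dec e1 e2) => He.
    have Je : ray true e1 e2 /\ ray true e2 e2 by rewrite /ray; lra.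
    case: (@prop4 u1 v1 u2 v2 e2 _ Hu1 Hv1 Hu2 Hv2 HJ Je E2 (SB_ne Hd)) => [D|[D|D]].
    + left; split => // x H1 H2; exact: D.
    + right; right; left; split => // x H1 H2; exact: D.
    + right; right; right; right; left; split => //; split => // x H2; apply: D; split => //.
      move: H2; rewrite /ray; lra.
  have Je : ray true e2 e1 /\ ray true e1 e1 by rewrite /ray; lra.
  case: (@prop4 u2 v2 u1 v1 e1 _ Hu2 Hv2 Hu1 Hv1 HJ' Je E1 (SB_ne Hd')) => [D|[D|D]].
  + right; left; split; first (rewrite /RC; lra). move=> x H1 H2; exact: D.
  + right; right; right; left; split; first (rewrite /RC; lra). move=> x H1 H2; exact: D.
  + right; right; right; right; right; split => //; split; first lra.
    move=> x H2; apply: D; split => //; move: H2; rewrite /ray; lra.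
- have := @B_cover_LR e2 u2 v2 e1 u1 v1 HwY' HwX' Hd'.
  case=> H; [right; left|right; right; right; left]; exact: H.
- case: (@B_cover_LR e1 u1 v1 e2 u2 v2 HwX' HwY' Hd) => H; [left|right; right; left]; exact: H.
- case: (Rle_dec e2 e1) => He.
    have Je : ray false e1 e2 /\ ray false e2 e2 by rewrite /ray; lra.
    case: (@prop4 u1 v1 u2 v2 e2 _ Hu1 Hv1 Hu2 Hv2 HJ Je E2 (SB_ne Hd)) => [D|[D|D]].
    + right; right; right; left; split => // x H2 H1; exact: D.
    + right; left; split => // x H2 H1; exact: D.
    + right; right; right; right; left; split => //; split => // x H2; apply: D; split => //.
      move: H2; rewrite /ray; lra.
  have Je : ray false e2 e1 /\ ray false e1 e1 by rewrite /ray; lra.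
  case: (@prop4 u2 v2 u1 v1 e1 _ Hu2 Hv2 Hu1 Hv1 HJ' Je E1 (SB_ne Hd')) => [D|[D|D]].
  + right; right; left; split; first (rewrite /RC; lra). move=> x H1 H2; exact: D.
  + left; split; first (rewrite /RC; lra). move=> x H1 H2; exact: D.
  + right; right; right; right; right; split => //; split; first lra.
    move=> x H2; apply: D; split => //; move: H2; rewrite /ray; lra.
Qed.

Lemma exists_below (I : finType) (f : I -> R) : exists x0 : R, forall i, (x0 < f i).
Proof.
have : forall s : seq I, exists x0 : R, forall i, i \in s -> (x0 < f i).
  elim => [|a s [x0 Hx0]]; first by exists 0.
  exists (Rmin x0 (f a) - 1) => i; rewrite in_cons => /orP [/eqP ->|Hi].
    have := Rmin_r x0 (f a); lra.
  have := Hx0 i Hi; have := Rmin_l x0 (f a); lra.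
case/(_ (enum I)) => x0 H; exists x0 => i; apply: H; by rewrite mem_enum.
Qed.

Definition bnd (s : shp) : R := match s with SZ _ b _ _ _ => b | _ => 0 end.

Lemma pts_nonempty s : wf s -> exists p, pts s p.
Proof.
case: s => [h|a b g1 g2 g3|k e u v] /= Hw.
- by exists (0, h 0).
- exists (a, g1 a); left; split => //=; lra.
- exists (e, u e); split; [rewrite /ray; case: k => /=; lra|by left].
Qed.


Local Close Scope R_scope.

Definition pb (P : Prop) : bool := if excluded_middle_informative P then true else false.
Lemma pbE P : pb P = true <-> P.
Proof. rewrite /pb; case: excluded_middle_informative => //. Qed.

Lemma height (I : finType) (adj : rel I) (R : I -> I -> Prop) :
  (forall i, ~~ adj i i) -> (forall i j, adj i j -> adj j i) ->
  (forall i j, R i j -> adj i j) -> (forall i j k, R i j -> R j k -> R i k) ->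
  exists h : I -> nat, (forall i, 0 < h i <= clique_number adj) /\
                       (forall i j, R i j -> h i < h j).
Proof.
move=> Hirr Hsym HRa HRt.
pose Pc j (S : {set I}) := pb (j \in S /\ (forall x, x \in S -> x != j -> R x j) /\
   (forall x y, x \in S -> y \in S -> x != y -> R x y \/ R y x)).
pose h j := \max_(S | Pc j S) #|S|.
have Psing : forall j, Pc j [set j].
  move=> j; apply/pbE; split; first exact: set11.
  split; first by move=> x; rewrite in_set1 => /eqP ->; rewrite eqxx.
  by move=> x y; rewrite !in_set1 => /eqP -> /eqP ->; rewrite eqxx.
have Pcl : forall j S, Pc j S -> is_clique adj S.
  move=> j S /pbE [_ [_ Hc]]; apply/forallP => x; apply/implyP => Hx.
  apply/forallP => y; apply/implyP => Hy; apply/implyP => Hxy.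
  case: (Hc x y Hx Hy Hxy) => H; [exact: HRa|apply: Hsym; exact: HRa].
have Hbd : forall j, h j <= clique_number adj.
  move=> j; apply/bigmax_leqP => S HS; apply: leq_bigmax_cond; exact: Pcl HS.
exists h; split.
  move=> i; rewrite Hbd andbT.
  by have := @leq_bigmax_cond _ (Pc i) (fun S : {set I} => #|S|) [set i] (Psing i); rewrite cards1.
move=> i j Rij.
case: (arg_maxnP (fun S : {set I} => #|S|) (Psing i)) => S HS Hmax.
have Ehi : h i = #|S|.
  apply/eqP; rewrite eqn_leq; apply/andP; split; last exact: leq_bigmax_cond.
  by apply/bigmax_leqP.
move/pbE: HS => [HiS [HSi HSc]].
have Hij : i != j by apply/negP => /eqP E; move: (HRa _ _ Rij); rewrite E (negbTE (Hirr j)).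
have HjS : j \notin S.
  apply/negP => Hj; move: (HSi j Hj); rewrite eq_sym Hij => /(_ erefl) Rji'.
  move: (HRa _ _ (HRt _ _ _ Rij Rji')); by rewrite (negbTE (Hirr i)).
have HP : Pc j (j |: S).
  apply/pbE; split; first by rewrite setU11.
  split.
    move=> x; rewrite in_setU1 => /orP [/eqP ->|Hx]; first by rewrite eqxx.
    move=> Hxj; case: (boolP (x == i)) => [/eqP -> //|Hxi].
    exact: HRt (HSi x Hx Hxi) Rij.
  have toj : forall x, x \in S -> R x j.
    move=> x Hx; case: (boolP (x == i)) => [/eqP -> //|Hxi].
    exact: HRt (HSi x Hx Hxi) Rij.
  move=> x y; rewrite !in_setU1 => /orP [/eqP ->|Hx] /orP [/eqP ->|Hy].
  - by rewrite eqxx.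
  - by move=> _; right; exact: toj.
  - by move=> _; left; exact: toj.
  - exact: HSc.
have := @leq_bigmax_cond _ (Pc j) (fun S : {set I} => #|S|) (j |: S) HP.
rewrite cardsU1 HjS -/(h j) Ehi add1n //.
Qed.

Lemma enc_lt a b c w : a < w -> b < w -> c < w -> a + w * (b + w * c) < w ^ 3.
Proof. move=> Ha Hb Hc. rewrite (_ : w ^ 3 = w * (w * w)); last by rewrite !expnS expn0 muln1. nia. Qed.
Lemma enc_inj a b a' b' w : a < w -> a' < w -> a + w * b = a' + w * b' -> a = a' /\ b = b'.
Proof. move=> Ha Ha' E. have : b = b' by nia. move=> Eb; subst; lia. Qed.

Theorem theorem7 (I : finType) (C : I -> region) :
  (forall i, is_2way_3monotone_chain (C i)) ->
  chromatic_number (disj_adj C) <=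
    (clique_number (disj_adj C)) ^ 3 + clique_number (disj_adj C).
Proof.
move=> HC.
have Hsh : forall i, exists s, wf s /\ forall p, C i p <-> pts s p := fun i => chain_shape (HC i).
pose sh i := proj1_sig (constructive_indefinite_description _ (Hsh i)).
have Hshw : forall i, wf (sh i).
  by move=> i; rewrite /sh; case: constructive_indefinite_description => s [].
have Hshp : forall i p, C i p <-> pts (sh i) p.
  by move=> i; rewrite /sh; case: constructive_indefinite_description => s [].
have [x0 Hx0] : exists x0, forall i, leftok x0 (sh i).
  case: (@exists_below I (fun i => bnd (sh i))) => x0 H; exists x0 => i.
  move: (H i); rewrite /bnd /leftok; by case: (sh i).
set adj := disj_adj C.
have adjE : forall i j, adj i j = true <-> disjS (sh i) (sh j).
  move=> i j; rewrite /adj /disj_adj; split.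
    case/andP => _; case: excluded_middle_informative => // Hd _ p Hi Hj.
    by apply: (Hd p); split; apply/Hshp.
  move=> Hd; have Hij : i != j.
    apply/eqP => E; subst; case: (@pts_nonempty (sh j) (Hshw j)) => p Hp; exact: (Hd p Hp Hp).
  rewrite Hij /=; case: excluded_middle_informative => // Hn; exfalso; apply: Hn.
  by move=> p [H1 H2]; apply: (Hd p); apply/Hshp.
have Hirr : forall i, ~~ adj i i by move=> i; rewrite /adj /disj_adj eqxx.
have Hsym : forall i j, adj i j -> adj j i.
  by move=> i j /adjE H; apply/adjE; exact: disjS_sym.
have [hA [hA1 hA2]] := @height I adj (fun i j => isA (sh i) /\ isA (sh j) /\ ltA x0 (sh i) (sh j))
  Hirr Hsym (fun i j H => proj2 (adjE i j) (proj1 (proj2 (proj2 H))))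
  (fun i j k H1 H2 => conj (proj1 H1) (conj (proj1 (proj2 H2))
     (ltA_trans (Hshw i) (Hshw j) (Hshw k) (proj1 H1) (proj1 H2) (proj1 (proj2 H2))
        (Hx0 i) (Hx0 j) (Hx0 k) (proj2 (proj2 H1)) (proj2 (proj2 H2))))).
have [hU [hU1 hU2]] := @height I adj (fun i j => Up (sh i) (sh j)) Hirr Hsym
  (fun i j H => proj2 (adjE i j) (@Up_disj (sh i) (sh j) H)) (fun i j k H1 H2 => @Up_trans (sh i) (sh j) (sh k) H1 H2).
have [hD [hD1 hD2]] := @height I adj (fun i j => Down (sh i) (sh j)) Hirr Hsym
  (fun i j H => proj2 (adjE i j) (@Down_disj (sh i) (sh j) H)) (fun i j k H1 H2 => @Down_trans (sh i) (sh j) (sh k) H1 H2).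
have [hI [hI1 hI2]] := @height I adj (fun i j => In (sh i) (sh j)) Hirr Hsym
  (fun i j H => proj2 (adjE i j) (@In_disj (sh i) (sh j) H)) (fun i j k H1 H2 => @In_trans (sh i) (sh j) (sh k) H1 H2).
set w := clique_number adj.
pose col i := if isA (sh i) then (hA i).-1
              else w + ((hU i).-1 + w * ((hD i).-1 + w * (hI i).-1)).
have dig : forall (h : I -> nat) i, 0 < h i <= w -> (h i).-1 < w.
  move=> h i /andP [H1 H2]; lia.
have col_lt : forall i, col i < w ^ 3 + w.
  move=> i; rewrite /col; case: (isA (sh i)).
    have := dig _ i (hA1 i); lia.
  have := @enc_lt _ _ _ w (dig _ i (hU1 i)) (dig _ i (hD1 i)) (dig _ i (hI1 i)); lia.
have Hcol : colorable [rel i j | (i != j) && adj i j] (w ^ 3 + w).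
  apply/existsP; exists [ffun i => Ordinal (col_lt i)].
  apply/forallP => i; apply/forallP => j; apply/implyP => /andP [Hij Hadj].
  rewrite !ffunE; apply/negP => /eqP /(congr1 val) /= E.
  have Hd := proj1 (adjE i j) Hadj.
  move: E; rewrite /col.
  case HAi : (isA (sh i)); case HAj : (isA (sh j)) => /=.
  - case: (@ltA_cover x0 (sh i) (sh j) (Hshw i) (Hshw j) HAi HAj (Hx0 i) (Hx0 j) Hd) => H.
      have := hA2 i j (conj HAi (conj HAj H)); have := hA1 i; have := hA1 j; lia.
    have := hA2 j i (conj HAj (conj HAi H)); have := hA1 i; have := hA1 j; lia.
  - have := dig _ i (hA1 i); nia.
  - have := dig _ j (hA1 j); nia.
  move=> E.
  have E' : (hU i).-1 + w * ((hD i).-1 + w * (hI i).-1) =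
            (hU j).-1 + w * ((hD j).-1 + w * (hI j).-1) by nia.
  have [EU E2] := @enc_inj _ _ _ _ w (dig _ i (hU1 i)) (dig _ j (hU1 j)) E'.
  have [ED EI] := @enc_inj _ _ _ _ w (dig _ i (hD1 i)) (dig _ j (hD1 j)) E2.
  have P1 := hU1 i; have P2 := hU1 j; have P3 := hD1 i; have P4 := hD1 j.
  have P5 := hI1 i; have P6 := hI1 j.
  case: (@B_cover (sh i) (sh j) (Hshw i) (Hshw j) HAi HAj Hd) => [H|[H|[H|[H|[H|H]]]]].
  - have := hU2 _ _ H; lia.
  - have := hU2 _ _ H; lia.
  - have := hD2 _ _ H; lia.
  - have := hD2 _ _ H; lia.
  - have := hI2 _ _ H; lia.
  - have := hI2 _ _ H; lia.
rewrite /chromatic_number; case: ex_minnP => m _ Hm; exact: Hm.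
Qed.
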